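(* Let $n>1$, $j_0,\dots,j_{n-1}\in\mathbb Z/(n)$ with $j_i=j_{-i}$ for all $i$, and let $B=B_{j_0,\dots,j_{n-1}}$, $X$ and $r_{j_0,\dots,j_{n-1}}$ be as in the context. Then $(X,r_{j_0,\dots,j_{n-1}})$ is a solution of the YBE, and: (a) it is indecomposable if and only if the additive subgroup of $\mathbb Z/(n)$ generated by $j_0,\dots,j_{n-1}$ is $\mathbb Z/(n)$; (b) it is irretractable if and only if the $n$ rows of the matrix $(j_{l-k})_{k,l\in\mathbb Z/(n)}$ are pairwise distinct, i.e. if $i,i'\in\mathbb Z/(n)$ satisfy $j_{i+k}=j_{i'+k}$ for every $k$, then $i=i'$.
   Context: Let $n>1$ and let $e_i$ ($i\in\mathbb Z/(n)$) be the standard basis of the free $\mathbb Z/(n)$-module $(\mathbb Z/(n))^n$, indices in $\mathbb Z/(n)$. Let $\alpha:\mathbb Z/(n)\to\mathrm{Aut}((\mathbb Z/(n))^n)$, $\alpha(i)(e_k)=e_{i+k}$. Given $j_0,\dots,j_{n-1}\in\mathbb Z/(n)$ with $j_i=j_{-i}$, let $b=b_{j_0,\dots,j_{n-1}}$ be the bilinear form on $(\mathbb Z/(n))^n$ with $b(e_k,e_l)=j_{l-k}$. $B_{j_0,\dots,j_{n-1}}$ is the set $(\mathbb Z/(n))^n\times\mathbb Z/(n)$ with multiplication $(u,i)\circ(v,j)=(u+\alpha(i)(v),i+j)$ and addition $(u,i)+(v,j)=(u+v,i+j+b(u,v))$; this is a left brace (a set with abelian group $+$ and group $\circ$ satisfying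 $a\circ(b+c)+a=a\circ b+a\circ c$), with lambda map $\lambda_{(u,i)}(v,j)=-(u,i)+(u,i)\circ(v,j)=(\alpha(i)(v),\ j-b(u,\alpha(i)(v)))$. Let $x_{ij}=(e_i,j)$ and $X=\{x_{ij}: i,j\in\mathbb Z/(n)\}$; then $\lambda_{x_{ij}}(x_{kl})=x_{k+j,\ l-j_{k+j-i}}$. Define $r_{j_0,\dots,j_{n-1}}:X\times X\to X\times X$ by $r(x,y)=(\lambda_x(y),\lambda^{-1}_{\lambda_x(y)}(x))$. A solution of the YBE is a pair $(X,r)$, $r(x,y)=(\sigma_x(y),\gamma_y(x))$, with $r^2=\mathrm{id}$, all $\sigma_x,\gamma_x$ bijective, and $r_{12}r_{23}r_{12}=r_{23}r_{12}r_{23}$; indecomposable means $\langle\sigma_x\rangle\le\mathrm{Sym}_X$ is transitive; irretractable means $\sigma_x\ne\sigma_y$ for $x\ne y$. *)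

(* Defs.v *)
From HB Require Import structures.
From mathcomp Require Import all_boot all_order all_algebra all_fingroup.
Set Implicit Arguments. Unset Strict Implicit. Unset Printing Implicit Defensive.
Import GRing.Theory.

Section YBE.
Variable X : finType.
Implicit Types r : X -> X -> X * X.

Definition sigma r (x : X) : X -> X := fun y => (r x y).1.
Definition gamma r (y : X) : X -> X := fun x => (r x y).2.

Definition r_pair r (p : X * X) : X * X := r p.1 p.2.
Definition r12 r (t : X * X * X) : X * X * X :=
  let: (x, y, z) := t in let: (a, b) := r x y in (a, b, z).
Definition r23 r (t : X * X * X) : X * X * X :=
  let: (x, y, z) := t in let: (a, b) := r y z in (x, a, b).

(* (X,r) is an (involutive, non-degenerate) solution of the YBE *)
Definition is_solution r : Prop :=
  [/\ (forall p, r_pair r (r_pair r p) = p),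
      (forall x, bijective (sigma r x)),
      (forall y, bijective (gamma r y)) &
      (forall t, r12 r (r23 r (r12 r t)) = r23 r (r12 r (r23 r t)))].

Definition sigma_set r : {set {perm X}} :=
  [set s : {perm X} | [exists x, [forall y, s y == sigma r x y]]].

Definition indecomposable r : Prop :=
  [transitive <<sigma_set r>>, on [set: X] | 'P].

Definition irretractable r : Prop :=
  forall x y : X, x <> y -> sigma r x <> sigma r y.
End YBE.

Section Brace.
Local Open Scope ring_scope.
Variable n : nat.
Variable j : 'Z_n -> 'Z_n.

Definition brace := ({ffun 'Z_n -> 'Z_n} * 'Z_n)%type.

Definition ebase (i : 'Z_n) : {ffun 'Z_n -> 'Z_n} := [ffun k => (k == i)%:R].

(* alpha(i)(e_k) = e_{i+k}, i.e. alpha(i)(v)(m) = v(m - i) *)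
Definition alpha (i : 'Z_n) (v : {ffun 'Z_n -> 'Z_n}) : {ffun 'Z_n -> 'Z_n} :=
  [ffun m => v (m - i)].

(* bilinear form with b(e_k, e_l) = j_{l-k} *)
Definition bform (u v : {ffun 'Z_n -> 'Z_n}) : 'Z_n :=
  \sum_(k : 'Z_n) \sum_(l : 'Z_n) u k * v l * j (l - k).

Definition lam (a c : brace) : brace :=
  (alpha a.2 c.1, c.2 - bform a.1 (alpha a.2 c.1)).

(* inverse of lambda_a (lambda_a is a bijection of the finite set B) *)
Definition lam_inv (a c : brace) : brace := odflt c [pick d | lam a d == c].

(* X = { x_{ij} = (e_i, j) }, indexed by pairs (i,j) *)
Definition Xset := ('Z_n * 'Z_n)%type.
Definition emb (x : Xset) : brace := (ebase x.1, x.2).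
Definition proj (w : brace) : Xset := (odflt 0 [pick i | w.1 == ebase i], w.2).

Definition r_brace (x y : Xset) : Xset * Xset :=
  let u := lam (emb x) (emb y) in (proj u, proj (lam_inv u (emb x))).
End Brace.

(* Main.v *)
Require Import Defs.
From mathcomp Require Import all_boot all_order all_algebra all_fingroup.
From mathcomp Require Import ring.
From Stdlib Require Import FunctionalExtensionality.
Import GRing.Theory.
Local Open Scope ring_scope.
Goal forall n (x y : 'Z_n), (x * y)%g = x + y. Proof. move=> n x y. reflexivity. Qed.
Goal forall n (x : 'Z_n), (x^-1)%g = - x. Proof. move=> n x. reflexivity. Qed.
Section S.
Variable n : nat.
Variable j : 'Z_n -> 'Z_n.
Lemma ebase_inj : injective (@ebase n).
Proof.
move=> a b /ffunP /(_ a); rewrite !ffunE eqxx.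
by case: eqVneq => // _ /eqP; rewrite eq_sym oner_eq0.
Qed.
Lemma alpha_ebase (q v : 'Z_n) : alpha q (ebase v) = ebase (v + q).
Proof. by apply/ffunP => m; rewrite !ffunE subr_eq. Qed.
Lemma alpha_inj (q : 'Z_n) : injective (@alpha n q).
Proof. move=> u v /ffunP H; apply/ffunP => m; have := H (m + q); by rewrite !ffunE addrK. Qed.
Lemma bform_ebase (p c : 'Z_n) : bform j (ebase p) (ebase c) = j (c - p).
Proof.
rewrite /bform (bigD1 p) //= [X in _ + X]big1; last first.
  by move=> k /negbTE kp; apply: big1 => l _; rewrite !ffunE kp mul0r mul0r.
rewrite addr0 (bigD1 c) //= [X in _ + X]big1; last first.
  by move=> l /negbTE lc; rewrite !ffunE lc mulr0 mul0r.
by rewrite !ffunE !eqxx mul1r mul1r addr0.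
Qed.
Lemma proj_emb (x : Xset n) : proj (emb x) = x.
Proof.
case: x => i a; rewrite /proj /emb /=; case: pickP => [i' /eqP /ebase_inj -> // | H].
by have := H i; rewrite eqxx.
Qed.
Lemma lam_inj (u : brace n) : injective (lam j u).
Proof.
case=> v t [v' t'] H.
have ev := f_equal fst H; have et := f_equal snd H; rewrite /lam /= in ev et.
move/alpha_inj: ev => ev; subst v'.
by rewrite (addIr _ et).
Qed.
Lemma lam_invE (u c d : brace n) : lam j u d = c -> lam_inv j u c = d.
Proof.
move=> H; rewrite /lam_inv; case: pickP => [d' /eqP|/(_ d)]; last by rewrite H eqxx.
by rewrite -H => /lam_inj.
Qed.
Hypothesis hj : forall i, j i = j (- i).
Lemma rE (x y : Xset n) : r_brace j x y =
  ((y.1 + x.2, y.2 - j (y.1 + x.2 - x.1)), (x.1 - (y.2 - j (y.1 + x.2 - x.1)), x.2 + j (y.1 + x.2 - x.1))).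
Proof.
case: x y => i a [k l]; rewrite /r_brace /=.
have E1 : lam j (emb (i, a)) (emb (k, l)) = emb (k + a, l - j (k + a - i)).
  by rewrite /lam /emb /= alpha_ebase bform_ebase.
rewrite E1 proj_emb (@lam_invE _ _ (emb (i - (l - j (k + a - i)), a + j (k + a - i)))) ?proj_emb //.
rewrite /lam /emb /= alpha_ebase bform_ebase subrK; congr pair.
by rewrite [j (i - _)]hj opprB addrK.
Qed.
Lemma r12E (T : finType) (r : T -> T -> T * T) x y z : r12 r (x, y, z) = ((r x y).1, (r x y).2, z).
Proof. by rewrite /r12; case: (r x y). Qed.
Lemma r23E (T : finType) (r : T -> T -> T * T) x y z : r23 r (x, y, z) = (x, (r y z).1, (r y z).2).
Proof. by rewrite /r23; case: (r y z). Qed.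
Lemma invol p : r_pair (r_brace j) (r_pair (r_brace j) p) = p.
Proof.
case: p => [[i a] [k l]]; rewrite /r_pair !rE /=.
set J := j (k + a - i).
have -> : j (i - (l - J) + (l - J) - (k + a)) = J by rewrite hj /J; congr (j _); ring.
congr (_, _, (_, _)); ring.
Qed.
Lemma braid t : r12 (r_brace j) (r23 (r_brace j) (r12 (r_brace j) t)) = r23 (r_brace j) (r12 (r_brace j) (r23 (r_brace j) t)).
Proof.
case: t => [[[i1 a1] [i2 a2]] [i3 a3]]; rewrite !(r12E, r23E) !rE /=.
set P := j (i2 + a1 - i1); set Q := j (i3 + a2 + a1 - i1); set R := j (i3 + a2 - i2).
have -> : j (i3 + (a1 + P) - (i1 - (a2 - P))) = Q by rewrite /Q; congr (j _); ring.
have -> : j (i3 + (a1 + P) + (a2 - P) - (i2 + a1)) = R by rewrite /R; congr (j _); ring.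
have -> : j (i2 - (a3 - R) + (a1 + Q) - (i1 - (a3 - R - Q))) = P by rewrite /P; congr (j _); ring.
congr (_, _, (_, _), (_, _)); ring.
Qed.
Lemma sigmaE (x y : Xset n) : sigma (r_brace j) x y = (y.1 + x.2, y.2 - j (y.1 + x.2 - x.1)).
Proof. by rewrite /sigma rE. Qed.
Lemma gammaE (x y : Xset n) : gamma (r_brace j) y x =
  (x.1 - (y.2 - j (y.1 + x.2 - x.1)), x.2 + j (y.1 + x.2 - x.1)).
Proof. by rewrite /gamma rE. Qed.
Lemma sigma_bij x : bijective (sigma (r_brace j) x).
Proof.
case: x => i a; exists (fun w : Xset n => (w.1 - a, w.2 + j (w.1 - i))) => [[k l]|[k l]];
  rewrite sigmaE /=.
  by rewrite addrK subrK.
by rewrite subrK addrK.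
Qed.
Lemma gamma_bij y : bijective (gamma (r_brace j) y).
Proof.
case: y => k l.
exists (fun w : Xset n => (w.1 + l - j (k + w.2 - w.1 - l), w.2 - j (k + w.2 - w.1 - l))) => [[i a]|[p q]];
  rewrite gammaE /=.
  set J := j (k + a - i).
  have -> : j (k + (a + J) - (i - (l - J)) - l) = J by rewrite /J; congr (j _); ring.
  congr pair; ring.
set J := j (k + q - p - l).
have -> : j (k + (q - J) - (p + l - J)) = J by rewrite /J; congr (j _); ring.
congr pair; ring.
Qed.
Lemma solution : is_solution (r_brace j).
Proof. split; [exact: invol | exact: sigma_bij | exact: gamma_bij | exact: braid]. Qed.
Lemma irr_iff : irretractable (r_brace j) <->
  (forall i i' : 'Z_n, (forall k : 'Z_n, j (i + k) = j (i' + k)) -> i = i').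
Proof.
split.
  move=> H i i' Hk; case: (eqVneq i i') => // ne; exfalso.
  apply: (H (- i, 0) (- i', 0)).
    by move=> /(f_equal fst) /= /oppr_inj e; rewrite e eqxx in ne.
  apply: functional_extensionality => -[k l]; rewrite !sigmaE /= addr0 !opprK.
  by rewrite (addrC k i) (addrC k i') Hk.
move=> H [i a] [i' a'] ne E.
have E' : forall y, sigma (r_brace j) (i, a) y = sigma (r_brace j) (i', a') y by move=> y; rewrite E.
have E0 : a = a'.
  have := f_equal fst (E' (0, 0)).
  by rewrite !sigmaE /= !add0r.
subst a'.
apply: ne; congr pair; apply: oppr_inj; apply: H => k.
have := f_equal snd (E' (k - a, 0)).
rewrite !sigmaE /= !sub0r => /oppr_inj.
have -> : k - a + a - i = - i + k by ring.
by have -> : k - a + a - i' = - i' + k by ring.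
Qed.
Definition sp (x : Xset n) : {perm Xset n} := perm (bij_inj (sigma_bij x)).
Lemma spE x y : sp x y = sigma (r_brace j) x y.
Proof. by rewrite /sp permE. Qed.
Lemma sp_in x : sp x \in <<sigma_set (r_brace j)>>%g.
Proof.
apply: mem_gen; rewrite inE; apply/existsP; exists x; apply/forallP => y.
by rewrite spE.
Qed.
Lemma indec_iff : indecomposable (r_brace j) <->
  (<<[set j i | i : 'Z_n]>>%g = [set: 'Z_n]).
Proof.
set G := <<sigma_set (r_brace j)>>%g; set H := <<[set j i | i : 'Z_n]>>%g.
split.
  move=> T; apply/eqP; rewrite eqEsubset subsetT /=; apply/subsetP => h _.
  have : ((0, h) : Xset n) \in orbit 'P G (0, 0) by rewrite (atransP T) ?inE.
  case/orbitP => g Gg e.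
  pose K := [set g : {perm Xset n} | [forall x, (g x).2 - x.2 \in H]].
  have gK : group_set K.
    apply/group_setP; split.
      by rewrite inE; apply/forallP => x; rewrite perm1 subrr; exact: group1.
    move=> g1 g2; rewrite !inE => /forallP Hg1 /forallP Hg2; apply/forallP => x.
    rewrite permM.
    have -> : (g2 (g1 x)).2 - x.2 = ((g2 (g1 x)).2 - (g1 x).2) + ((g1 x).2 - x.2) by ring.
    exact: (groupM (Hg2 (g1 x)) (Hg1 x)).
  have sGK : G \subset Group gK.
    rewrite gen_subG; apply/subsetP => s; rewrite inE => /existsP [x /forallP Hs].
    rewrite inE; apply/forallP => y; rewrite (eqP (Hs y)) sigmaE /=.
    have -> : y.2 - j (y.1 + x.2 - x.1) - y.2 = - j (y.1 + x.2 - x.1) by ring.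
    have hm : j (y.1 + x.2 - x.1) \in H by apply: mem_gen; apply: imset_f.
    exact: (groupVr hm).
  have := subsetP sGK g Gg; rewrite inE => /forallP /(_ (0, 0)).
  by rewrite -apermE e /= subr0.
move=> HT; apply/imsetP; exists ((0, 0) : Xset n); first by rewrite inE.
set O := orbit 'P G (0, 0).
have stab x y : (sp x y \in O) = (y \in O) by rewrite -apermE orbit_actr // sp_in.
pose Hs := [set h : 'Z_n | [forall y : Xset n, (y \in O) ==> (((y.1, y.2 + h) : Xset n) \in O)]].
have gHs : group_set Hs.
  apply/group_setP; split.
    by rewrite inE; apply/forallP => -[k l]; rewrite /= addr0 implybb.
  move=> h1 h2; rewrite !inE => /forallP H1 /forallP H2; apply/forallP => -[k l].
  apply/implyP => yO; have := implyP (H1 (k, l)) yO => /= y1.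
  have := implyP (H2 (k, l + h1)) y1 => /=.
  by rewrite -addrA.
have sHs : H \subset Group gHs.
  rewrite gen_subG; apply/subsetP => h /imsetP [m _ ->]; rewrite inE.
  apply/forallP => -[k l]; apply/implyP => /= yO.
  rewrite -(stab (k - m, 0)) spE sigmaE /=.
  by rewrite addr0 (_ : k - (k - m) = m) ?addrK //; ring.
have HsT h : h \in Hs by apply: (subsetP sHs); rewrite HT inE.
have colB (m : nat) : exists l, ((m%:R, l) : Xset n) \in O.
  elim: m => [|m [l Hl]]; first by exists 0; exact: orbit_refl.
  exists (l - j (m%:R + 1 - 0)); rewrite -natr1.
  by move: Hl; rewrite -(stab (0, 1)) spE sigmaE.
apply/eqP; rewrite eqEsubset subsetT andbT; apply/subsetP => -[k l] _.
have [l0 Hl0] := colB k; rewrite natr_Zp in Hl0.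
have := HsT (l - l0); rewrite inE => /forallP /(_ (k, l0)) /implyP /(_ Hl0) /=.
by have -> : l0 + (l - l0) = l by ring.
Qed.
End S.
Local Close Scope ring_scope.
Theorem mainTheorem13 (n : nat) (j : 'Z_n -> 'Z_n) :
  1 < n ->
  (forall i : 'Z_n, j i = j (- i)%R) ->
  [/\ is_solution (r_brace j),
      (indecomposable (r_brace j) <->
         (<<[set j i | i : 'Z_n]>>%g = [set: 'Z_n])) &
      (irretractable (r_brace j) <->
         (forall i i' : 'Z_n, (forall k : 'Z_n, j (i + k)%R = j (i' + k)%R) -> i = i'))].
Proof.
move=> _ hj; split; [exact: solution | exact: indec_iff | exact: irr_iff].
Qed.
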